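(* For each $k\in\mathbb N$, the class of bilabelled graphs $\mathcal P_k$ is closed under taking bilabelled minors.
   Context: A $(k,k)$-bilabelled graph is $\boldsymbol F=(F,\boldsymbol u,\boldsymbol v)$, $\boldsymbol u,\boldsymbol v\in V(F)^k$. A bilabelled minor of $\boldsymbol F$ is a $(k,k)$-bilabelled graph obtained from $\boldsymbol F$ by a sequence of edge contractions, edge deletions and deletions of unlabelled vertices (labels remain on their vertices). Series composition $\boldsymbol F\cdot\boldsymbol F'$: disjoint union with $v_i$ identified with $u'_i$, multiple edges removed, labels $(\boldsymbol u,\boldsymbol v')$. Parallel composition $\boldsymbol F\odot\boldsymbol F'$: identify $u_i$ with $u'_i$, $v_i$ with $v'_i$, multiple edges removed. For $\sigma\in\mathfrak S_{2k}$, $\boldsymbol F^\sigma$ has in-labels $(w_{\sigma(1)},\dots,w_{\sigma(k)})$, out-labels $(w_{\sigma(k+1)},\dots,w_{\sigma(2k)})$, $\boldsymbol w=\boldsymbol u\boldsymbol v$. $\mathscr C_k$ = cyclic group of rotations of $(1,\dots,k,2k,\dots,k+1)$. $\boldsymbol C_k$: vertices $[2k]$, in-labels $(1,\dots,k)$, out-labels $(k+1,\dots,2k)$, edges $\{i,i+1\}$ ($i\in[2k]\setminus\{k,2k\}$), $\{1,k+1\},\{k,2k\}$; $\boldsymbol M_k$: same vertices/labels, edges $\{i,i+k\}$. $\mathcal Q_k^P,\mathcal Q_k^S$ = bilabelled minors of $\boldsymbol C_k,\boldsymbol M_k$; $\mathcal Q_k$ their union. $\mathcal P_k$ = smallest class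 containing $\mathcal Q_k$, closed under series composition, $\boldsymbol F\mapsto\boldsymbol F\odot\boldsymbol Q$ ($\boldsymbol Q\in\mathcal Q_k^P$), and $\boldsymbol F\mapsto\boldsymbol F^\sigma$ ($\sigma\in\mathscr C_k$). *)

(* Defs.v *)
From mathcomp Require Import all_boot all_fingroup.
Unset Printing Implicit Defensive.

(** A (k,k)-bilabelled graph: a finite vertex type, an adjacency relation
    (only its symmetric, loop-free part is used, see [edge]), in-labels
    [bin : 'I_k -> V] and out-labels [bout : 'I_k -> V]. *)
Record bgraph (k : nat) : Type := BGraph {
  bvert : finType;
  badj : rel bvert;
  bin : 'I_k -> bvert;
  bout : 'I_k -> bvert }.
Arguments BGraph {k} bvert badj bin bout.
Arguments bvert {k} _.
Arguments badj {k} _ _ _.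
Arguments bin {k} _ _.
Arguments bout {k} _ _.

Definition edge {k} (F : bgraph k) (x y : bvert F) : bool :=
  (x != y) && (badj F x y || badj F y x).

Definition bg_iso {k} (F G : bgraph k) : Prop :=
  exists f : bvert F -> bvert G,
    [/\ bijective f,
        (forall x y, edge G (f x) (f y) = edge F x y),
        (forall i, f (bin F i) = bin G i) &
        (forall i, f (bout F i) = bout G i)].

Definition edge_deletion {k} (F G : bgraph k) : Prop :=
  exists (a b : bvert F), edge F a b /\
  exists f : bvert F -> bvert G,
    [/\ bijective f,
        (forall x y, edge G (f x) (f y) =
           edge F x y && ~~ (((x == a) && (y == b)) || ((x == b) && (y == a)))),
        (forall i, f (bin F i) = bin G i) &
        (forall i, f (bout F i) = bout G i)].

Definition vertex_deletion {k} (F G : bgraph k) : Prop :=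
  exists x : bvert F,
    (forall i, bin F i != x) /\ (forall i, bout F i != x) /\
  exists f : bvert G -> bvert F,
    [/\ injective f,
        (forall y, y != x <-> exists z, f z = y),
        (forall z w, edge F (f z) (f w) = edge G z w),
        (forall i, f (bin G i) = bin F i) &
        (forall i, f (bout G i) = bout F i)].

(** G is (up to isomorphism) obtained from F by contracting the edge ab;
    f is the quotient map identifying exactly a and b; labels move along f;
    multiple edges (and the contracted edge) disappear. *)
Definition edge_contraction {k} (F G : bgraph k) : Prop :=
  exists (a b : bvert F), edge F a b /\
  exists f : bvert F -> bvert G,
    [/\ (forall p, exists x, f x = p),
        f a = f b,
        (forall x y, f x = f y -> x = y \/ ((x = a \/ x = b) /\ (y = a \/ y = b))),
        (forall p q, edge G p q <->
           (p != q /\ exists x y, [/\ f x = p, f y = q & edge F x y])) &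
        ((forall i, bin G i = f (bin F i)) /\
        (forall i, bout G i = f (bout F i)))].

Inductive bminor {k} (F : bgraph k) : bgraph k -> Prop :=
| bminor_refl : bminor F F
| bminor_iso G H : bminor F G -> bg_iso G H -> bminor F H
| bminor_edel G H : bminor F G -> edge_deletion G H -> bminor F H
| bminor_vdel G H : bminor F G -> vertex_deletion G H -> bminor F H
| bminor_contr G H : bminor F G -> edge_contraction G H -> bminor F H.

(** Gluing: G is the quotient of the disjoint union of F and F' by the
    equivalence relation generated by [R] (a relation on the sum type),
    with multiple edges removed (and no loops). *)
Definition glued {k} (F F' G : bgraph k)
    (R : rel (bvert F + bvert F')%type)
    (phi : (bvert F + bvert F')%type -> bvert G) : Prop :=
  [/\ (forall p, exists s, phi s = p),
      (forall s t, phi s = phi t <-> connect R s t) &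
      (forall p q, edge G p q <->
        (p != q /\
         ((exists x y, [/\ phi (inl x) = p, phi (inl y) = q & edge F x y]) \/
          (exists x y, [/\ phi (inr x) = p, phi (inr y) = q & edge F' x y]))))].

Definition series_rel {k} (F F' : bgraph k) : rel (bvert F + bvert F')%type :=
  fun s t => [exists i : 'I_k,
    ((s == inl (bout F i)) && (t == inr (bin F' i))) ||
    ((t == inl (bout F i)) && (s == inr (bin F' i)))].

Definition bseries {k} (F F' G : bgraph k) : Prop :=
  exists phi, [/\ glued F F' G (series_rel F F') phi,
    (forall i, bin G i = phi (inl (bin F i))) &
    (forall i, bout G i = phi (inr (bout F' i)))].

Definition parallel_rel {k} (F F' : bgraph k) : rel (bvert F + bvert F')%type :=
  fun s t => [exists i : 'I_k,
    ((s == inl (bin F i)) && (t == inr (bin F' i))) ||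
    ((t == inl (bin F i)) && (s == inr (bin F' i))) ||
    ((s == inl (bout F i)) && (t == inr (bout F' i))) ||
    ((t == inl (bout F i)) && (s == inr (bout F' i)))].

Definition bparallel {k} (F F' G : bgraph k) : Prop :=
  exists phi, [/\ glued F F' G (parallel_rel F F') phi,
    (forall i, bin G i = phi (inl (bin F i))) &
    (forall i, bout G i = phi (inl (bout F i)))].

(** The label word w = u v, indexed by 'I_(k+k) (0-based). *)
Definition wlab {k} (F : bgraph k) (j : 'I_(k + k)) : bvert F :=
  match split j with inl i => bin F i | inr i => bout F i end.

Definition bperm {k} (F : bgraph k) (s : 'S_(k + k)) (G : bgraph k) : Prop :=
  exists f : bvert F -> bvert G,
    [/\ bijective f,
        (forall x y, edge G (f x) (f y) = edge F x y),
        (forall i, bin G i = f (wlab F (s (lshift k i)))) &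
        (forall i, bout G i = f (wlab F (s (rshift k i))))].

(** The sequence (1,...,k,2k,...,k+1), 0-based: j |-> j for j < k and
    j |-> 3k-1-j for j >= k; it is an involution of [0,2k). *)
Definition cseq (k j : nat) : nat := if j < k then j else 3 * k - 1 - j.

(** Rotations of that cyclic sequence: sigma (s_j) = s_(j+r mod 2k). *)
Definition in_cyclic k (s : 'S_(k + k)) : Prop :=
  exists r : nat, forall j : 'I_(k + k),
    nat_of_ord (s j) = cseq k ((cseq k j + r) %% (k + k)).

(** The bilabelled graphs C_k and M_k (0-based vertices 0..2k-1,
    in-labels 0..k-1, out-labels k..2k-1). *)
Definition Cadj k : rel 'I_(k + k) := fun a b =>
  [|| ((a.+1 == b :> nat) && (b < k)),
      ((k <= a) && (a.+1 == b :> nat)),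
      ((a == 0 :> nat) && (b == k :> nat)) |
      ((a == k.-1 :> nat) && (b == (k + k).-1 :> nat))].

Definition Madj k : rel 'I_(k + k) := fun a b => (a + k == b :> nat).

Definition Ck k : bgraph k :=
  @BGraph k ('I_(k + k) : finType) (Cadj k) (lshift k) (@rshift k k).
Definition Mk k : bgraph k :=
  @BGraph k ('I_(k + k) : finType) (Madj k) (lshift k) (@rshift k k).

Definition QP {k} (F : bgraph k) : Prop := bminor (Ck k) F.
Definition QS {k} (F : bgraph k) : Prop := bminor (Mk k) F.

Inductive Pk {k} : bgraph k -> Prop :=
| Pk_Q F : QP F \/ QS F -> Pk F
| Pk_series F F' G : Pk F -> Pk F' -> bseries F F' G -> Pk G
| Pk_parallel F Q G : Pk F -> QP Q -> bparallel F Q G -> Pk G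
| Pk_perm F s G : Pk F -> in_cyclic k s -> bperm F s G -> Pk G.

(* Main.v *)
Require Import Defs.
From mathcomp Require Import all_boot all_fingroup zify.
From Stdlib Require Import Setoid.
Set Implicit Arguments. Unset Strict Implicit. Unset Printing Implicit Defensive.


Lemma connect_hom (T T' : finType) (R : rel T) (R' : rel T') (g : T -> T') :
  (forall s t, R s t -> R' (g s) (g t)) ->
  forall s t, connect R s t -> connect R' (g s) (g t).
Proof.
move=> H s t /connectP [p pth ->]; elim: p s pth => [|a p IH] s /=.
  by move=> _; exact: connect0.
case/andP=> Hsa pth; apply: connect_trans (connect1 (H _ _ Hsa)) (IH _ pth).
Qed.

Lemma connect_ind (T : finType) (R : rel T) (E : T -> T -> Prop) :
  (forall x, E x x) -> (forall x y z, E x y -> E y z -> E x z) ->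
  (forall x y, R x y -> E x y) -> forall x y, connect R x y -> E x y.
Proof.
move=> Er Et ER x y /connectP [p pth ->]; elim: p x pth => [|a p IH] x /=.
  by move=> _; exact: Er.
case/andP=> Hxa pth; apply: Et (ER _ _ Hxa) (IH _ pth).
Qed.

Section Basics.
Variable k : nat.
Implicit Types F G H X Y : bgraph k.

Lemma edge_sym F x y : edge F x y = edge F y x.
Proof. by rewrite /edge eq_sym orbC. Qed.

Lemma edge_neq F x y : edge F x y -> x != y.
Proof. by case/andP. Qed.

Lemma wlab_l F i : wlab F (lshift k i) = bin F i.
Proof. by rewrite /wlab (unsplitK (inl i)). Qed.
Lemma wlab_r F i : wlab F (rshift k i) = bout F i.
Proof. by rewrite /wlab (unsplitK (inr i)). Qed.

Lemma wlab_map F G (f : bvert F -> bvert G) :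
  (forall i, f (bin F i) = bin G i) -> (forall i, f (bout F i) = bout G i) ->
  forall j, f (wlab F j) = wlab G j.
Proof. by move=> Hi Ho j; rewrite /wlab; case: split. Qed.

Lemma wlab_cases F (P : bvert F -> Prop) :
  (forall i, P (bin F i)) -> (forall i, P (bout F i)) -> forall j, P (wlab F j).
Proof. by move=> Hi Ho j; rewrite /wlab; case: split. Qed.

Lemma bminor_trans F G H : bminor F G -> bminor G H -> bminor F H.
Proof.
move=> FG; elim=> [|X Y _ IH e|X Y _ IH e|X Y _ IH e|X Y _ IH e].
- done.
- exact: bminor_iso _ _ _ IH e.
- exact: bminor_edel _ _ _ IH e.
- exact: bminor_vdel _ _ _ IH e.
- exact: bminor_contr _ _ _ IH e.
Qed.

Definition Good F := forall H, bminor F H -> Pk H.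

Lemma Good_Pk F : Good F -> Pk F.
Proof. by move=> g; apply: g; constructor. Qed.

Lemma Good_minor F G : Good F -> bminor F G -> Good G.
Proof. by move=> g FG H GH; apply: g; exact: bminor_trans FG GH. Qed.

Lemma Good_of_inv (Inv : bgraph k -> Prop) :
  (forall X, Inv X -> Pk X) ->
  (forall X Y, Inv X -> bg_iso X Y -> Inv Y) ->
  (forall X Y, Inv X -> edge_deletion X Y -> Inv Y) ->
  (forall X Y, Inv X -> vertex_deletion X Y -> Inv Y) ->
  (forall X Y, Inv X -> edge_contraction X Y -> Inv Y) ->
  forall G, Inv G -> Good G.
Proof.
move=> HP Hi He Hv Hc G IG H GH; apply: HP.
elim: GH => [|X Y _ IH e|X Y _ IH e|X Y _ IH e|X Y _ IH e] //.
- exact: Hi IH e. - exact: He IH e. - exact: Hv IH e. - exact: Hc IH e.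
Qed.

Lemma Good_Q F : QP F \/ QS F -> Good F.
Proof.
move=> [h|h] H FH; apply: Pk_Q; [left|right]; exact: bminor_trans h FH.
Qed.

Definition restrict F (keep : rel (bvert F)) : bgraph k :=
  BGraph (bvert F) (fun x y => badj F x y && keep x y && keep y x) (bin F) (bout F).
Arguments restrict : clear implicits.

Lemma edge_restrict F keep x y :
  edge (restrict F keep) x y = edge F x y && keep x y && keep y x.
Proof.
rewrite /edge /=; case: (x != y) => //=.
by case: (badj F x y); case: (badj F y x); case: (keep x y); case: (keep y x).
Qed.

Lemma restrict_minor F keep : bminor F (restrict F keep).
Proof.
pose D (kp : rel (bvert F)) := [set p : bvert F * bvert F |
   edge F p.1 p.2 && ~~ (kp p.1 p.2 && kp p.2 p.1)].
suff: forall n kp, #|D kp| <= n -> bminor F (restrict F kp) by apply; exact: leqnn.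
elim=> [|n IH] kp.
  rewrite leqn0 => /eqP /cards0_eq D0.
  apply: (bminor_iso _ _ _ (bminor_refl F)); exists id; split => //.
    by exists id.
  move=> x y; rewrite edge_restrict.
  case E: (edge F x y) => //=; apply/negPn/negP => Hn.
  by have := in_set0 (x, y); rewrite -D0 inE /= E Hn.
case: (set_0Vmem (D kp)) => [D0|[[a b] Hab]] Hn.
  apply: IH; by rewrite D0 cards0.
pose kp2 (x y : bvert F) := kp x y || ((x == a) && (y == b)) || ((x == b) && (y == a)).
move: (Hab); rewrite inE /= => /andP [eab nk].
have sub : D kp2 \proper D kp.
  apply/properP; split.
    apply/subsetP => [[x y]]; rewrite !inE /= /kp2 => /andP [-> /=].
    by apply: contra => /andP [-> ->].
  exists (a, b) => //; rewrite inE /= eab /kp2 !eqxx /=.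
  by rewrite !orbT.
have IH2 := IH kp2 _.
have : bminor F (restrict F kp2).
  apply: IH2; rewrite -ltnS; exact: leq_trans (proper_card sub) Hn.
move=> m2; apply: (bminor_edel _ _ _ m2); exists a, b; split.
  by rewrite edge_restrict eab /kp2 !eqxx !orbT.
exists id; split => //.
- by exists id.
- move=> x y; rewrite !edge_restrict /kp2.
  case: (boolP ((x == a) && (y == b))) => [/andP [/eqP -> /eqP ->]|h1].
    by rewrite !eqxx /= andbF; move: nk; rewrite negb_and => /orP [] /negbTE ->; rewrite ?andbF // andbC.
  case: (boolP ((x == b) && (y == a))) => [/andP [/eqP -> /eqP ->]|h2].
    by rewrite !eqxx /= andbF; move: nk; rewrite negb_and => /orP [] /negbTE ->; rewrite ?andbF // andbC.
  rewrite /= !orbF.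
  case: (boolP ((y == a) && (x == b))) => [/andP [/eqP ya /eqP xb]|h3].
    by move: h2; rewrite ya xb !eqxx.
  case: (boolP ((y == b) && (x == a))) => [/andP [/eqP ya /eqP xb]|h4].
    by move: h1; rewrite ya xb !eqxx.
  by rewrite /= !orbF ?andbT.
Qed.


Definition cmap F (x y : bvert F) (hxy : x != y) (v : bvert F) : {v : bvert F | v != y} :=
  insubd (exist _ x hxy) v.

Lemma val_cmap F (x y : bvert F) (hxy : x != y) v :
  val (cmap hxy v) = if v != y then v else x.
Proof. by rewrite /cmap val_insubd. Qed.

Lemma cmap_val F (x y : bvert F) (hxy : x != y) (u : {v : bvert F | v != y}) :
  cmap hxy (val u) = u.
Proof. apply: val_inj; rewrite val_cmap; by case: u => /= v ->. Qed.

Lemma cmap_xy F (x y : bvert F) (hxy : x != y) : cmap hxy x = cmap hxy y.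
Proof. by apply: val_inj; rewrite !val_cmap hxy eqxx. Qed.

Lemma cmap_ker F (x y : bvert F) (hxy : x != y) a b :
  cmap hxy a = cmap hxy b -> a = b \/ ((a = x \/ a = y) /\ (b = x \/ b = y)).
Proof.
move/(congr1 val); rewrite !val_cmap.
case: (boolP (a != y)) => ha; case: (boolP (b != y)) => hb.
- by left.
- move: hb; rewrite negbK => /eqP -> ->; right; tauto.
- move: ha; rewrite negbK => /eqP -> <-; right; tauto.
- move: ha hb; rewrite !negbK => /eqP -> /eqP ->; by left.
Qed.

Definition contract F (x y : bvert F) (hxy : x != y) : bgraph k :=
  @BGraph k {v : bvert F | v != y}
    (fun u v => [exists a, exists b, (cmap hxy a == u) && (cmap hxy b == v) && edge F a b])
    (fun i => cmap hxy (bin F i)) (fun i => cmap hxy (bout F i)).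

Lemma edge_contract F (x y : bvert F) (hxy : x != y) u v :
  edge (contract hxy) u v <->
  u != v /\ exists a b, [/\ cmap hxy a = u, cmap hxy b = v & edge F a b].
Proof.
rewrite [edge (contract _) _ _]/edge /=; split.
  case/andP=> -> /orP [] /existsP [a] /existsP [b] /andP [/andP [/eqP ea /eqP eb] e].
    by split => //; exists a, b.
  by split => //; exists b, a; rewrite edge_sym.
case=> -> [a [b [ea eb e]]] /=; apply/orP; left.
by apply/existsP; exists a; apply/existsP; exists b; rewrite ea eb !eqxx.
Qed.

Lemma contract_ec F (x y : bvert F) (hxy : x != y) :
  edge F x y -> edge_contraction F (contract hxy).
Proof.
move=> exy; exists x, y; split => //; exists (cmap hxy); split.
- by move=> p; exists (val p); exact: cmap_val.
- exact: cmap_xy.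
- exact: cmap_ker.
- move=> p q; exact: edge_contract.
- by split.
Qed.

Definition delv F (z : bvert F) (hi : forall i, bin F i != z) (ho : forall i, bout F i != z) : bgraph k :=
  @BGraph k {v : bvert F | v != z} (fun u v => badj F (val u) (val v))
    (fun i => exist _ (bin F i) (hi i)) (fun i => exist _ (bout F i) (ho i)).

Lemma edge_delv F (z : bvert F) hi ho (u v : bvert (@delv F z hi ho)) :
  edge F (val u) (val v) = edge (delv hi ho) u v.
Proof. by rewrite /edge /= val_eqE. Qed.

Lemma delv_vd F (z : bvert F) hi ho : vertex_deletion F (@delv F z hi ho).
Proof.
exists z; split => //; split => //; exists val; split => //.
- exact: val_inj.
- move=> y; split => [h|[u <-]]; last exact: (valP u).
  by exists (exist _ y h).
Qed.

Lemma QP_lab (Q : bgraph k) : QP Q -> forall v : bvert Q, exists j, v = wlab Q j.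
Proof.
elim=> [|X Y _ IH e|X Y _ IH e|X Y _ IH e|X Y _ IH e].
- move=> v; exists v; rewrite /wlab /= -{1}(splitK v); by case: (split v).
- case: e => f [[g fg gf] _ fi fo] v.
  case: (IH (g v)) => j hj; exists j; by rewrite -(wlab_map fi fo) -hj gf.
- case: e => a [b [_ [f [[g fg gf] _ fi fo]]]] v.
  case: (IH (g v)) => j hj; exists j; by rewrite -(wlab_map fi fo) -hj gf.
- case: e => x [_ [_ [f [fi _ _ hi ho]]]] v.
  case: (IH (f v)) => j hj; exists j; apply: fi; by rewrite (wlab_map hi ho).
- case: e => a [b [_ [f [fs _ _ _ [hi ho]]]]] v.
  case: (fs v) => u <-; case: (IH u) => j ->; exists j.
  apply: wlab_map => i; by rewrite ?hi ?ho.
Qed.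

Definition sw (A B : Type) (s : A + B) : B + A :=
  match s with inl a => inr a | inr b => inl b end.
Arguments sw {A B} s.
Lemma swK (A B : Type) (s : A + B) : sw (sw s) = s. Proof. by case: s. Qed.

Lemma glued_swap F F' G R phi :
  glued F F' G R phi ->
  glued F' F G (fun s t => R (sw s) (sw t)) (fun s => phi (sw s)).
Proof.
case=> Hs Hk He; split.
- move=> p; case: (Hs p) => s <-; exists (sw s); by rewrite swK.
- move=> s t; split => [/Hk|h]; last apply/Hk.
    move/(connect_hom (g := sw) (R' := fun s t => R (sw s) (sw t))).
    by rewrite !swK; apply => a b; rewrite !swK.
  move: h; exact: connect_hom.
- move=> p q; split => [/He [nq h]|[nq h]]; [|apply/He]; split => //; case: h => h; by [right|left].
Qed.

Lemma glued_eqR F F' G R R' phi :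
  R =2 R' -> glued F F' G R phi -> glued F F' G R' phi.
Proof.
move=> e [Hs Hk He]; split => // s t; rewrite -(eq_connect e); exact: Hk.
Qed.

Lemma glued_sym F F' G R phi s t :
  glued F F' G R phi -> connect R s t -> connect R t s.
Proof. by case=> _ Hk _ /Hk e; apply/Hk. Qed.

Lemma G_iso F F' G H R phi (f : bvert G -> bvert H) :
  glued F F' G R phi -> bijective f ->
  (forall x y, edge H (f x) (f y) = edge G x y) ->
  glued F F' H R (fun s => f (phi s)).
Proof.
case=> Hs Hk He [g fg gf] Hed; have fi : injective f := can_inj fg.
split.
- move=> p; case: (Hs (g p)) => s Hsp; exists s; by rewrite Hsp gf.
- move=> s t; split => [/fi/Hk|/Hk ->] //.
- move=> p q; rewrite -[p]gf -[q]gf Hed He (inj_eq fi).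
  split => -[nq [[x [y [ex ey exy]]]|[x [y [ex ey exy]]]]]; split => //.
  + by left; exists x, y; rewrite ex ey.
  + by right; exists x, y; rewrite ex ey.
  + by left; exists x, y; split => //; apply: fi.
  + by right; exists x, y; split => //; apply: fi.
Qed.

End Basics.
Arguments restrict {k} F keep.

Section Glue.
Variable k : nat.
Implicit Types F G H X Y : bgraph k.

Definition pr (T : eqType) (a b x y : T) := ((x == a) && (y == b)) || ((x == b) && (y == a)).
Lemma pr_sym (T : eqType) (a b x y : T) : pr a b x y = pr a b y x.
Proof. by rewrite /pr orbC [(y == a) && _]andbC [(y == b) && _]andbC. Qed.

Lemma G_edel F F' G H R phi a b (f : bvert G -> bvert H) :
  glued F F' G R phi -> bijective f ->
  (forall x y, edge H (f x) (f y) = edge G x y && ~~ (((x == a) && (y == b)) || ((x == b) && (y == a)))) ->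
  glued (restrict F (fun x y => ~~ pr a b (phi (inl x)) (phi (inl y))))
        (restrict F' (fun x y => ~~ pr a b (phi (inr x)) (phi (inr y)))) H R (fun s => f (phi s)).
Proof.
case=> Hs Hk He [g fg gf] Hed; have fi : injective f := can_inj fg.
split.
- move=> p; case: (Hs (g p)) => s Hsp; exists s; by rewrite Hsp gf.
- move=> s t; split => [/fi/Hk|/Hk ->] //.
- move=> p q; rewrite -[p]gf -[q]gf Hed (inj_eq fi); split.
  + case/andP => /He [nq h] np; split => //.
    case: h => [[x [y [ex ey exy]]]|[x [y [ex ey exy]]]]; [left|right]; exists x, y;
      by rewrite edge_restrict ex ey exy [pr _ _ (g q) _]pr_sym np.
  + case=> nq [[x [y [ex ey]]]|[x [y [ex ey]]]];
      rewrite edge_restrict => /andP [/andP [exy k1] k2]; apply fi in ex; apply fi in ey;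
      (apply/andP; split; [apply/He; split => //| by move: k1; rewrite ex ey]).
    * by left; exists x, y.
    * by right; exists x, y.
Qed.

Definition embL (A : Type) (P : pred A) (B : Type) (s : {x : A | P x} + B) : A + B :=
  match s with inl u => inl (val u) | inr b => inr b end.
Arguments embL {A P B} s.

Lemma G_vdelL F F' G H R phi (z : bvert F) hi ho (f : bvert H -> bvert G) :
  glued F F' G R phi ->
  (forall t, ~~ R (inl z) t) -> (forall t, ~~ R t (inl z)) ->
  injective f -> (forall y, y != phi (inl z) <-> exists u, f u = y) ->
  (forall u v, edge G (f u) (f v) = edge H u v) ->
  exists psi, glued (@delv k F z hi ho) F' H (fun s t => R (embL s) (embL t)) psi /\
              forall s, f (psi s) = phi (embL s).
Proof.
case=> Hs Hk He Rz1 Rz2 fi Hr Hed.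
have cz : forall s, connect R s (inl z) -> s = inl z.
  move=> s /connectP [p]; case/lastP: p => [|p x] /=; first by move=> _ ->.
  rewrite rcons_path last_rcons => /andP [_ h] ex; by rewrite -ex (negbTE (Rz2 _)) in h.
have nw : forall s : bvert (delv hi ho) + bvert F', phi (embL s) != phi (inl z).
  move=> s; apply/eqP => /Hk /cz; case: s => [u|b] //= [] eu.
  by move: (valP u); rewrite /= eu eqxx.
have exh : forall s : bvert (delv hi ho) + bvert F', exists h, f h == phi (embL s).
  by move=> s; case: (proj1 (Hr _) (nw s)) => h hh; exists h; rewrite hh.
pose psi (s : bvert (delv hi ho) + bvert F') := xchoose (exh s).
have fpsi : forall s : bvert (delv hi ho) + bvert F', f (psi s) = phi (embL s) by move=> s; exact/eqP/(xchooseP (exh s)).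
have inr_ : forall p, f p != phi (inl z) by move=> p; apply/(Hr (f p)).2; exists p.
exists psi; split => //; split.
- move=> p; case: (Hs (f p)) => -[v|b] hs0.
    have hv : v != z by apply: contraNneq (inr_ p) => e; rewrite -hs0 e.
    by exists (inl (exist _ v hv)); apply: fi; rewrite fpsi.
  by exists (inr b); apply: fi; rewrite fpsi.
- move=> s t; split.
  + move=> e; have : phi (embL s) = phi (embL t) by rewrite -!fpsi e.
    move/Hk.
    pose g0 (x : bvert F + bvert F') : bvert (delv hi ho) + bvert F' :=
      match x with inl v => (match insub v with Some u => inl u | None => s end) | inr b => inr b end.
    have g0K : forall x, g0 (embL x) = x.
      case=> [u|b] //=; case: insubP => [u0 _ /val_inj -> //|]; by move: (valP u) => /= ->.
    have g0E : forall x, x != inl z -> embL (g0 x) = x.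
      move=> x0 hx0; case: x0 hx0 => [v|b] //= hv; case: insubP => [u _ <- //|]; by rewrite negbK => /eqP e0; rewrite e0 eqxx in hv.
    move=> c; rewrite -[s]g0K -[t]g0K; apply: connect_hom c => a b Rab.
    have na : a != inl z by apply: contraTneq Rab => ->; exact: Rz1.
    have nb : b != inl z by apply: contraTneq Rab => ->; exact: Rz2.
    by rewrite !g0E.
  + move=> c; apply: fi; rewrite !fpsi; apply/Hk; move: c.
    exact: (connect_hom (g := embL)).
- move=> p q; rewrite -Hed He (inj_eq fi); split.
  + case=> nq [[x [y [ex ey exy]]]|[x [y [ex ey exy]]]]; split => //.
      have hx : x != z by apply: contraNneq (inr_ p) => e; rewrite -ex e.
      have hy : y != z by apply: contraNneq (inr_ q) => e; rewrite -ey e.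
      left; exists (exist _ x hx), (exist _ y hy); split; try (apply: fi; by rewrite fpsi).
      by rewrite -edge_delv.
    by right; exists x, y; split => //; apply: fi; rewrite fpsi.
  + case=> nq [[u [v [eu ev euv]]]|[x [y [ex ey exy]]]]; split => //.
      by left; exists (val u), (val v); rewrite -eu -ev !fpsi edge_delv.
    by right; exists x, y; rewrite -ex -ey !fpsi.
Qed.

Definition mL F (x y : bvert F) (hxy : x != y) (B : Type) (s : bvert F + B) :
   {v : bvert F | v != y} + B :=
  match s with inl v => inl (cmap hxy v) | inr b => inr b end.
Arguments mL {F x y} hxy {B} s.

Lemma G_contrL F F' G H R phi (x y : bvert F) (hxy : x != y)
  (R'' : rel ({v : bvert F | v != y} + bvert F')) (g : bvert G -> bvert H) :
  glued F F' G R phi -> edge F x y ->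
  (forall p, exists a, g a = p) -> g (phi (inl x)) = g (phi (inl y)) ->
  (forall a b, g a = g b -> a = b \/ ((a = phi (inl x) \/ a = phi (inl y)) /\
                                     (b = phi (inl x) \/ b = phi (inl y)))) ->
  (forall p q, edge H p q <-> (p != q /\ exists a b, [/\ g a = p, g b = q & edge G a b])) ->
  (forall s t, R s t -> R'' (mL hxy s) (mL hxy t)) ->
  (forall s' t', R'' s' t' -> exists s t, [/\ mL hxy s = s', mL hxy t = t' & R s t]) ->
  glued (contract hxy) F' H R'' (fun s => g (phi (embL s))).
Proof.
case=> Hs Hk He exy gs gxy gk gE hom back.
have pmL : forall v, g (phi (inl (val (cmap hxy v)))) = g (phi (inl v)).
  move=> v; rewrite val_cmap; case: ifP => // /negbFE /eqP ->; by [].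
have pm : forall s : bvert F + bvert F', g (phi (embL (mL hxy s))) = g (phi s) by case=> [v|b] /=; rewrite ?pmL.
have mS : forall s' : {v : bvert F | v != y} + bvert F', exists s, mL hxy s = s'.
  by case=> [u|b]; [exists (inl (val u)); rewrite /= cmap_val | exists (inr b)].
split.
- move=> p; case: (gs p) => a <-; case: (Hs a) => s <-; exists (mL hxy s); exact: pm.
- move=> s' t'; case: (mS s') => s <-; case: (mS t') => t <-; rewrite !pm; split.
  + have cx : forall s, phi s = phi (inl x) \/ phi s = phi (inl y) ->
        connect R'' (mL hxy s) (mL hxy (inl x)) /\ connect R'' (mL hxy (inl x)) (mL hxy s).
      move=> s0 [] e.
        by split; apply: (connect_hom hom); apply/Hk.
      have -> : mL hxy (inl x) = mL hxy (inl y) by rewrite /= cmap_xy.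
      by split; apply: (connect_hom hom); apply/Hk.
    move/gk => [/Hk c| [hs ht]]; first exact: (connect_hom hom).
    exact: connect_trans (cx s hs).1 (cx t ht).2.
  + move=> c; have := @connect_ind _ R'' (fun a b => g (phi (embL a)) = g (phi (embL b))).
    move/(_ _ _ _ _ _ c); rewrite !pm; apply => //.
    * by move=> ? ? ? -> ->.
    * move=> a b /back [s0 [t0 [<- <- r]]]; rewrite !pm.
      by have /Hk -> := connect1 r.
- move=> P Q; rewrite gE; split.
  + case=> nPQ [A [B [gA gB /He [nAB [[x' [y' [ex ey exy']]]|[x' [y' [ex ey exy']]]]]]]];
      split => //.
      left; exists (cmap hxy x'), (cmap hxy y'); split => /=; rewrite ?pmL ?ex ?ey //.
      apply/edge_contract; split; last by exists x', y'.
      apply/negP => /eqP e; move: nPQ; rewrite -gA -gB -ex -ey -(pmL x') -(pmL y') e.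
      by rewrite eqxx.
    by right; exists x', y'; rewrite /= ex ey.
  + case=> nPQ [[u [v [eu ev /edge_contract [nuv [a [b [ea eb eab]]]]]]]|[x' [y' [ex ey exy']]]];
      split => //.
      exists (phi (inl a)), (phi (inl b)); split.
      * by rewrite -eu -ea /= pmL.
      * by rewrite -ev -eb /= pmL.
      * apply/He; split; last by left; exists a, b.
        apply/negP => /eqP e; move: nPQ; by rewrite -eu -ev -ea -eb /= !pmL e eqxx.
    exists (phi (inr x')), (phi (inr y')); split => //.
    apply/He; split; last by right; exists x', y'.
    apply/negP => /eqP e; move: nPQ; by rewrite -ex -ey /= e eqxx.
Qed.

End Glue.

Definition smap (A A' B B' : Type) (f1 : A -> A') (f2 : B -> B') (s : A + B) : A' + B' :=
  match s with inl a => inl (f1 a) | inr b => inr (f2 b) end.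

Lemma eq_inl (A B : eqType) (a a' : A) : ((inl a : A + B) == inl a') = (a == a'). Proof. by []. Qed.
Lemma eq_inr (A B : eqType) (b b' : B) : ((inr b : A + B) == inr b') = (b == b'). Proof. by []. Qed.
Lemma eq_inlr (A B : eqType) (a : A) (b : B) : ((inl a : A + B) == inr b) = false. Proof. by []. Qed.
Lemma eq_inrl (A B : eqType) (a : A) (b : B) : ((inr b : A + B) == inl a) = false. Proof. by []. Qed.
Definition sumE := (eq_inl, eq_inr, eq_inlr, eq_inrl).

Definition LRel (I : finType) (A B : eqType) (l1 : I -> A) (l2 : I -> B) : rel (A + B) :=
  fun s t => [exists i, ((s == inl (l1 i)) && (t == inr (l2 i))) ||
                        ((t == inl (l1 i)) && (s == inr (l2 i)))].

Section LRelS.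
Variables (I : finType) (A B A' B' : eqType) (l1 : I -> A) (l2 : I -> B).

Lemma LRel_hom (f1 : A -> A') (f2 : B -> B') s t :
  LRel l1 l2 s t -> LRel (fun i => f1 (l1 i)) (fun i => f2 (l2 i)) (smap f1 f2 s) (smap f1 f2 t).
Proof.
move=> /existsP [i /orP [] /andP [/eqP -> /eqP ->]]; apply/existsP; exists i;
  by rewrite /= !eqxx ?orbT.
Qed.

Lemma LRel_back (f1 : A -> A') (f2 : B -> B') s' t' :
  LRel (fun i => f1 (l1 i)) (fun i => f2 (l2 i)) s' t' ->
  exists s t, [/\ smap f1 f2 s = s', smap f1 f2 t = t' & LRel l1 l2 s t].
Proof.
move=> /existsP [i /orP [] /andP [/eqP -> /eqP ->]];
  [exists (inl (l1 i)), (inr (l2 i)) | exists (inr (l2 i)), (inl (l1 i))];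
  split => //; apply/existsP; exists i; by rewrite !eqxx ?orbT.
Qed.

Lemma LRel_sym s t : LRel l1 l2 s t = LRel l1 l2 t s.
Proof. by apply: eq_existsb => i; rewrite orbC. Qed.

Lemma LRel_freeL z t : (forall i, l1 i != z) -> ~~ LRel l1 l2 (inl z) t /\ ~~ LRel l1 l2 t (inl z).
Proof.
move=> h; split; apply/existsP => -[i]; case: t => v /=;
  by rewrite ?sumE ?(eq_sym z) ?(negbTE (h i)) ?andbF.
Qed.

Lemma LRel_freeR z t : (forall i, l2 i != z) -> ~~ LRel l1 l2 (inr z) t /\ ~~ LRel l1 l2 t (inr z).
Proof.
move=> h; split; apply/existsP => -[i]; case: t => v /=;
  by rewrite ?sumE ?(eq_sym z) ?(negbTE (h i)) ?andbF.
Qed.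

Lemma LRel_pull (f1 : A' -> A) (f2 : B' -> B) (l1' : I -> A') (l2' : I -> B') s t :
  injective f1 -> injective f2 -> (forall i, f1 (l1' i) = l1 i) -> (forall i, f2 (l2' i) = l2 i) ->
  LRel l1 l2 (smap f1 f2 s) (smap f1 f2 t) = LRel l1' l2' s t.
Proof.
move=> i1 i2 e1 e2; apply: eq_existsb => i; rewrite -e1 -e2.
by case: s => v; case: t => w /=; rewrite ?sumE ?(inj_eq i1) ?(inj_eq i2).
Qed.

End LRelS.

Lemma LRel_eq (I : finType) (A B : eqType) (l1 l1' : I -> A) (l2 l2' : I -> B) :
  l1 =1 l1' -> l2 =1 l2' -> LRel l1 l2 =2 LRel l1' l2'.
Proof. by move=> e1 e2 s t; apply: eq_existsb => i; rewrite e1 e2. Qed.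

Section P3.
Variable k : nat.
Implicit Types F G H X Y : bgraph k.

Lemma series_LRel F F' : series_rel F F' =2 LRel (bout F) (bin F').
Proof. by []. Qed.

Lemma parallel_LRel F F' : parallel_rel F F' =2 LRel (wlab F) (wlab F').
Proof.
move=> s t; apply/existsP/existsP => -[i].
  case/orP => [/orP [/orP [] h|h]|h].
  - by exists (lshift k i); rewrite !wlab_l h.
  - by exists (lshift k i); rewrite !wlab_l h orbT.
  - by exists (rshift k i); rewrite !wlab_r h.
  - by exists (rshift k i); rewrite !wlab_r h orbT.
rewrite /wlab; case: (split i) => j /orP [] h; exists j; by rewrite h ?orbT.
Qed.

Lemma glued_eqphi F F' G R phi phi' :
  phi =1 phi' -> glued F F' G R phi -> glued F F' G R phi'.
Proof.
move=> e [Hs Hk He]; split.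
- by move=> p; case: (Hs p) => s <-; exists s.
- by move=> s t; rewrite -!e.
- move=> p q; rewrite He; split => -[nq h]; split => //.
    by case: h => -[x [y [ex ey exy]]]; [left|right]; exists x, y; rewrite -!e.
  by case: h => -[x [y [ex ey exy]]]; [left|right]; exists x, y; rewrite !e.
Qed.


Lemma G_vdelR F F' G H R phi (z : bvert F') hi ho (f : bvert H -> bvert G) :
  glued F F' G R phi ->
  (forall t, ~~ R (inr z) t) -> (forall t, ~~ R t (inr z)) ->
  injective f -> (forall y, y != phi (inr z) <-> exists u, f u = y) ->
  (forall u v, edge G (f u) (f v) = edge H u v) ->
  exists psi, glued F (@delv k F' z hi ho) H (fun s t => R (smap id val s) (smap id val t)) psi /\
              forall s, f (psi s) = phi (smap id val s).
Proof.
move=> gl R1 R2 fi Hr He.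
have [psi [gl2 fpsi]] := G_vdelL hi ho (glued_swap gl) (fun t => R1 (sw t)) (fun t => R2 (sw t)) fi Hr He.
exists (fun s => psi (sw s)); split.
  by apply: glued_eqR (glued_swap gl2) => s t; case: s; case: t.
by move=> s; rewrite fpsi; case: s.
Qed.

Lemma G_contrR F F' G H R phi (x y : bvert F') (hxy : x != y)
  (R'' : rel (bvert F + {v : bvert F' | v != y})) (g : bvert G -> bvert H) :
  glued F F' G R phi -> edge F' x y ->
  (forall p, exists a, g a = p) -> g (phi (inr x)) = g (phi (inr y)) ->
  (forall a b, g a = g b -> a = b \/ ((a = phi (inr x) \/ a = phi (inr y)) /\
                                     (b = phi (inr x) \/ b = phi (inr y)))) ->
  (forall p q, edge H p q <-> (p != q /\ exists a b, [/\ g a = p, g b = q & edge G a b])) ->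
  (forall s t, R s t -> R'' (smap id (cmap hxy) s) (smap id (cmap hxy) t)) ->
  (forall s' t', R'' s' t' -> exists s t, [/\ smap id (cmap hxy) s = s', smap id (cmap hxy) t = t' & R s t]) ->
  glued F (contract hxy) H R'' (fun s => g (phi (smap id val s))).
Proof.
move=> gl exy gs gxy gk gE hom back.
have E : forall s : bvert F' + bvert F, mL hxy s = sw (smap id (cmap hxy) (sw s)) by case.
have hom' : forall s t : bvert F' + bvert F, R (sw s) (sw t) -> R'' (sw (mL hxy s)) (sw (mL hxy t)).
  by move=> s t /= /hom; rewrite !E !swK.
have back' : forall s' t', R'' (sw s') (sw t') ->
    exists s t : bvert F' + bvert F, [/\ mL hxy s = s', mL hxy t = t' & R (sw s) (sw t)].
  move=> s' t' /back [s [t [e1 e2 r]]]; exists (sw s), (sw t); rewrite !swK; split => //.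
    by rewrite E swK e1 swK.
  by rewrite E swK e2 swK.
have := @G_contrL k F' F G H _ _ x y hxy (fun a b => R'' (sw a) (sw b)) g (glued_swap gl) exy gs gxy gk gE hom' back'.
move/glued_swap => gl2.
apply: (glued_eqphi _ (glued_eqR _ gl2)).
- by case.
- by move=> a b; rewrite !swK.
Qed.

Lemma wlab_contract F (x y : bvert F) (hxy : x != y) j :
  wlab (contract hxy) j = cmap hxy (wlab F j).
Proof. by rewrite /wlab; case: split. Qed.

Lemma wlab_restrict F keep j : wlab (restrict F keep) j = wlab F j.
Proof. by rewrite /wlab; case: split. Qed.

Lemma wlab_Ck j : wlab (Ck k) j = j.
Proof. by rewrite /wlab /= -{2}(splitK j); case: split. Qed.

Lemma merge_par F (u v : 'I_(k + k)) (huv : edge (Ck k) u v) (hab : wlab F v != wlab F u) :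
  exists Q, QP Q /\ bparallel F Q (contract hab).
Proof.
pose C := restrict (Ck k) (fun x y => pr u v x y).
have e' : edge C v u by rewrite edge_restrict edge_sym huv /pr !eqxx !orbT.
have hvu : (v : bvert C) != u by exact: edge_neq e'.
pose Q := contract hvu.
have wQ : forall j, wlab Q j = cmap hvu j by move=> j; rewrite wlab_contract wlab_restrict wlab_Ck.
exists Q; split.
  rewrite /QP; apply: (@bminor_contr k (Ck k) C Q); [exact: restrict_minor | exact: contract_ec hvu e'].
pose phi2 (s : bvert F + bvert Q) := cmap hab (match s with inl t => t | inr q => wlab F (val q) end).
exists phi2; split => //.
apply: glued_eqR; first by move=> s t; rewrite parallel_LRel.
pose R := LRel (wlab F) (wlab Q).
have Rj : forall j, R (inl (wlab F j)) (inr (wlab Q j)) /\ R (inr (wlab Q j)) (inl (wlab F j)).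
  by move=> j; split; apply/existsP; exists j; rewrite !eqxx ?orbT.
pose r (s : bvert F + bvert Q) := match s with inl t => t | inr q => wlab F (val q) end.
have cR : forall s, connect R s (inl (r s)) /\ connect R (inl (r s)) s.
  case=> [t|q]; first by split; exact: connect0.
  have := Rj (val q); rewrite wQ cmap_val => -[h1 h2]; split; exact: connect1.
have cuv : connect R (inl (wlab F u)) (inl (wlab F v)) /\ connect R (inl (wlab F v)) (inl (wlab F u)).
  have eq : wlab Q u = wlab Q v by rewrite !wQ cmap_xy.
  have [a1 a2] := Rj u; have [b1 b2] := Rj v.
  split; apply: connect_trans (connect1 _) (connect1 _); [exact: a1| rewrite eq; exact: b2|exact: b1|rewrite -eq; exact: a2].
split.
- by move=> P; exists (inl (val P)); rewrite /phi2 cmap_val.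
- move=> s t; split.
  + move=> /cmap_ker [e|[hs ht]].
      apply: connect_trans (cR s).1 _; have -> : r s = r t := e; exact: (cR t).2.
    apply: connect_trans (cR s).1 (connect_trans _ (cR t).2).
    have hs' : r s = wlab F v \/ r s = wlab F u := hs.
    have ht' : r t = wlab F v \/ r t = wlab F u := ht.
    case: hs' => ->; case: ht' => ->; try exact: connect0; by case: cuv.
  + move=> c; apply: (@connect_ind _ R (fun a b => phi2 a = phi2 b)) c => //.
    * by move=> ? ? ? -> ->.
    * move=> a b /existsP [j /orP [] /andP [/eqP -> /eqP ->]]; rewrite /phi2 wQ val_cmap;
        case: ifP => // /negbFE /eqP ->; by rewrite cmap_xy.
- move=> P P'; rewrite edge_contract; split => -[nP h]; split => //.
    by left.
  case: h => // -[x [y [_ _ /edge_contract [nxy [a [b [ea eb eab]]]]]]].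
  move: nxy; rewrite -ea -eb.
  move: eab; rewrite edge_restrict /pr => /andP [/andP [_ /orP [] /andP [/eqP -> /eqP ->]] _];
    by rewrite cmap_xy eqxx.
Qed.

End P3.

Section P4.
Variable k : nat.
Implicit Types F G H X Y : bgraph k.

Lemma cmap_hval F (x y : bvert F) (hxy : x != y) (T : Type) (h : bvert F -> T) v :
  h x = h y -> h (val (cmap hxy v)) = h v.
Proof. by move=> e; rewrite val_cmap; case: ifP => // /negbFE /eqP ->. Qed.

Lemma wlab_delv F (z : bvert F) hi ho j : val (wlab (@delv k F z hi ho) j) = wlab F j.
Proof. by rewrite /wlab; case: split. Qed.

Lemma embL_smap (A : Type) (P : pred A) (B : Type) (s : {x : A | P x} + B) : embL s = smap val id s.
Proof. by case: s. Qed.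

Lemma par_iso F Q X Y : bparallel F Q X -> bg_iso X Y -> bparallel F Q Y.
Proof.
case=> phi [gl li lo] [f [fb fe fi fo]]; exists (fun s => f (phi s)); split.
- exact: G_iso gl fb fe.
- by move=> i; rewrite -fi li.
- by move=> i; rewrite -fo lo.
Qed.

Lemma par_edel F Q X Y : bparallel F Q X -> edge_deletion X Y ->
  exists F' Q', [/\ bminor F F', bminor Q Q' & bparallel F' Q' Y].
Proof.
case=> phi [gl li lo] [a [b [eab [f [fb fe fi fo]]]]].
exists (restrict F (fun x y => ~~ pr a b (phi (inl x)) (phi (inl y)))),
       (restrict Q (fun x y => ~~ pr a b (phi (inr x)) (phi (inr y)))).
split; try exact: restrict_minor.
exists (fun s => f (phi s)); split.
- exact: G_edel gl fb fe.
- by move=> i; rewrite -fi li.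
- by move=> i; rewrite -fo lo.
Qed.

Lemma par_wX F (B : finType) X (phi : bvert F + B -> bvert X) : (forall i, bin X i = phi (inl (bin F i))) ->
  (forall i, bout X i = phi (inl (bout F i))) ->
  forall j, wlab X j = phi (inl (wlab F j)) :> bvert X.
Proof. by move=> li lo j; rewrite /wlab; case: split. Qed.

Lemma par_vdel F Q X Y : bparallel F Q X -> QP Q -> vertex_deletion X Y ->
  exists F', bminor F F' /\ bparallel F' Q Y.
Proof.
case=> phi [gl li lo] qQ [w [hwi [hwo [f [fi fr fe fli flo]]]]].
have wl : forall j, wlab X j != w := @wlab_cases k X (fun v => v != w) hwi hwo.
have wX := @par_wX F _ X phi li lo.
have [Hs Hk He] := gl.
case: (Hs w) => -[z|q] hz; last first.
  exfalso; case: (QP_lab qQ q) => j ej.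
  have : phi (inl (wlab F j)) = phi (inr q).
    apply/Hk; apply: connect1; rewrite parallel_LRel ej; apply/existsP; exists j; by rewrite !eqxx.
  by rewrite hz -wX => /eqP; rewrite (negbTE (wl j)).
have hz' : forall j, wlab F j != z.
  by move=> j; apply/eqP => e; have := wl j; rewrite wX e hz eqxx.
have hi : forall i, bin F i != z by move=> i; have := hz' (lshift k i); rewrite wlab_l.
have ho : forall i, bout F i != z by move=> i; have := hz' (rshift k i); rewrite wlab_r.
have R1 : forall t, ~~ parallel_rel F Q (inl z) t.
  by move=> t; rewrite parallel_LRel; case: (LRel_freeL (wlab Q) t hz').
have R2 : forall t, ~~ parallel_rel F Q t (inl z).
  by move=> t; rewrite parallel_LRel; case: (LRel_freeL (wlab Q) t hz').
have Hr : forall y, y != phi (inl z) <-> exists u, f u = y by rewrite hz.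
have [psi [gl2 fpsi]] := G_vdelL hi ho gl R1 R2 fi Hr fe.
exists (delv hi ho); split; first exact: bminor_vdel _ _ _ (bminor_refl _) (delv_vd hi ho).
exists psi; split.
- apply: glued_eqR gl2 => s t; rewrite !parallel_LRel !embL_smap.
  apply: LRel_pull; [exact: val_inj | by move=> ? ? -> | move=> j; exact: wlab_delv | by []].
- by move=> i; apply: fi; rewrite fpsi fli li.
- by move=> i; apply: fi; rewrite fpsi flo lo.
Qed.

Lemma par_contr F Q X Y : bparallel F Q X -> edge_contraction X Y ->
  exists F' Q', [/\ bminor F F', bminor Q Q' & bparallel F' Q' Y].
Proof.
case=> phi [gl li lo] [a [b [eab [g [gs gab gk gE [gli glo]]]]]].
have [Hs Hk He] := gl.
case/He: eab => nab [[x [y [ex ey exy]]]|[x [y [ex ey exy]]]].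
- have hxy := edge_neq exy. subst a b.
  have hom : forall s t, parallel_rel F Q s t -> parallel_rel (contract hxy) Q (mL hxy s) (mL hxy t).
    move=> s t; rewrite !parallel_LRel => /(LRel_hom (cmap hxy) id).
    by rewrite (LRel_eq (l1' := wlab (contract hxy)) (l2' := wlab Q)) // => j; rewrite wlab_contract.
  have back : forall s' t', parallel_rel (contract hxy) Q s' t' ->
      exists s t, [/\ mL hxy s = s', mL hxy t = t' & parallel_rel F Q s t].
    move=> s' t'; rewrite parallel_LRel.
    rewrite (LRel_eq (l1' := fun j => cmap hxy (wlab F j)) (l2' := fun j => id (wlab Q j))); first last.
    + by [].
    + by move=> j; rewrite wlab_contract.
    move/(LRel_back (l1 := wlab F) (l2 := wlab Q) (f1 := cmap hxy) (f2 := id)) => [s [t [e1 e2 r]]]; exists s, t; split; [exact: e1|exact: e2|by rewrite parallel_LRel].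
  have gl2 := G_contrL gl exy gs gab gk gE hom back.
  exists (contract hxy), Q; split.
  + exact: bminor_contr _ _ _ (bminor_refl _) (contract_ec hxy exy).
  + exact: bminor_refl.
  exists (fun s => g (phi (embL s))); split => //.
  + move=> i; rewrite gli li; symmetry; exact: (cmap_hval hxy (h := fun v => g (phi (inl v))) _ gab).
  + move=> i; rewrite glo lo; symmetry; exact: (cmap_hval hxy (h := fun v => g (phi (inl v))) _ gab).
- have hxy := edge_neq exy. subst a b.
  have hom : forall s t, parallel_rel F Q s t ->
      parallel_rel F (contract hxy) (smap id (cmap hxy) s) (smap id (cmap hxy) t).
    move=> s t; rewrite !parallel_LRel => /(LRel_hom id (cmap hxy)).
    by rewrite (LRel_eq (l1' := wlab F) (l2' := wlab (contract hxy))) // => j; rewrite wlab_contract.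
  have back : forall s' t', parallel_rel F (contract hxy) s' t' ->
      exists s t, [/\ smap id (cmap hxy) s = s', smap id (cmap hxy) t = t' & parallel_rel F Q s t].
    move=> s' t'; rewrite parallel_LRel.
    rewrite (LRel_eq (l1' := fun j => id (wlab F j)) (l2' := fun j => cmap hxy (wlab Q j))); first last.
    + by move=> j; rewrite wlab_contract.
    + by [].
    move/(LRel_back (l1 := wlab F) (l2 := wlab Q) (f1 := id) (f2 := cmap hxy)) => [s [t [e1 e2 r]]]; exists s, t; split; [exact: e1|exact: e2|by rewrite parallel_LRel].
  have gl2 := G_contrR gl exy gs gab gk gE hom back.
  exists F, (contract hxy); split.
  + exact: bminor_refl.
  + exact: bminor_contr _ _ _ (bminor_refl _) (contract_ec hxy exy).
  exists (fun s => g (phi (smap id val s))); split => //.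
  + by move=> i; rewrite gli li.
  + by move=> i; rewrite glo lo.
Qed.

Lemma Par F Q G : Good F -> QP Q -> bparallel F Q G -> Good G.
Proof.
move=> gF qQ pG.
apply: (@Good_of_inv k (fun X => exists F' Q', [/\ Good F', QP Q' & bparallel F' Q' X])).
- by move=> X [F' [Q' [g q p]]]; exact: Pk_parallel (Good_Pk g) q p.
- move=> X Y [F' [Q' [g q p]]] e; exists F', Q'; split => //; exact: par_iso p e.
- move=> X Y [F' [Q' [g q p]]] e; case: (par_edel p e) => F'' [Q'' [m1 m2 p2]].
  exists F'', Q''; split => //; [exact: Good_minor g m1 | exact: bminor_trans q m2].
- move=> X Y [F' [Q' [g q p]]] e; case: (par_vdel p q e) => F'' [m1 p2].
  exists F'', Q'; split => //; exact: Good_minor g m1.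
- move=> X Y [F' [Q' [g q p]]] e; case: (par_contr p e) => F'' [Q'' [m1 m2 p2]].
  exists F'', Q''; split => //; [exact: Good_minor g m1 | exact: bminor_trans q m2].
- by exists F, Q.
Qed.

End P4.

Section P5.
Variable k : nat.
Implicit Types F G H X Y : bgraph k.

Lemma wlab_perm F (s : 'S_(k + k)) X (f0 : bvert F -> bvert X) :
  (forall i, bin X i = f0 (wlab F (s (lshift k i)))) ->
  (forall i, bout X i = f0 (wlab F (s (rshift k i)))) ->
  forall j, wlab X j = f0 (wlab F (s j)).
Proof.
move=> li lo j; rewrite -[j](splitK j); case: (split j) => i /=.
  by rewrite wlab_l li.
by rewrite wlab_r lo.
Qed.

Definition relab X (li lo : 'I_k -> bvert X) : bgraph k := @BGraph k (bvert X) (badj X) li lo.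

Lemma perm_iso F s X Y : bperm F s X -> bg_iso X Y -> bperm F s Y.
Proof.
case=> f0 [fb0 fe0 li lo] [f [fb fe fi fo]]; exists (fun x => f (f0 x)); split.
- exact: bij_comp fb fb0.
- by move=> x y; rewrite fe fe0.
- by move=> i; rewrite -fi li.
- by move=> i; rewrite -fo lo.
Qed.

Lemma perm_edel F s X Y : bperm F s X -> edge_deletion X Y ->
  exists F', edge_deletion F F' /\ bperm F' s Y.
Proof.
case=> f0 [fb0 fe0 li lo] [a [b [eab [f [fb fe fi fo]]]]].
case: (fb0) => g0 c1 c2; have i0 : injective f0 := can_inj c1.
exists (relab (fun i => f (f0 (bin F i))) (fun i => f (f0 (bout F i)))); split.
  exists (g0 a), (g0 b); split; first by rewrite -fe0 !c2.
  exists (fun x => f (f0 x)); split => //.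
  - exact: bij_comp fb fb0.
  - move=> x y; rewrite [edge (relab _ _) _ _]/edge /= -/(edge Y _ _) fe fe0.
    by rewrite -[a]c2 -[b]c2 !(inj_eq i0) !c2.
exists id; split => //.
- by exists id.
- by move=> i; rewrite -fi li /wlab /=; case: split.
- by move=> i; rewrite -fo lo /wlab /=; case: split.
Qed.

Lemma perm_vdel F s X Y : bperm F s X -> vertex_deletion X Y ->
  exists F', vertex_deletion F F' /\ bperm F' s Y.
Proof.
case=> f0 [fb0 fe0 li lo] [w [hwi [hwo [f [fi fr fe fli flo]]]]].
case: (fb0) => g0 c1 c2; have i0 : injective f0 := can_inj c1.
have wl : forall j, wlab X j != w := @wlab_cases k X (fun v => v != w) hwi hwo.
have nw : forall j, f0 (wlab F j) != w.
  move=> j; have := wl (s^-1 j)%g; by rewrite (wlab_perm li lo) permKV.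
have exh : forall j, exists h, f h == f0 (wlab F j).
  by move=> j; case: (proj1 (fr _) (nw j)) => h hh; exists h; rewrite hh.
pose lb j := xchoose (exh j).
have flb : forall j, f (lb j) = f0 (wlab F j) by move=> j; exact/eqP/(xchooseP (exh j)).
exists (relab (fun i => lb (lshift k i)) (fun i => lb (rshift k i))); split.
  exists (g0 w); split.
    by move=> i; apply/eqP => e; have := nw (lshift k i); rewrite wlab_l e c2 eqxx.
  split.
    by move=> i; apply/eqP => e; have := nw (rshift k i); rewrite wlab_r e c2 eqxx.
  exists (fun h => g0 (f h)); split.
  - by move=> x y /(can_inj c2) /fi.
  - move=> y; split.
      move=> hy; have : f0 y != w by apply: contraNneq hy => <-; rewrite c1.
      by move/(proj1 (fr _)) => [h hh]; exists h; rewrite hh c1.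
    by case=> h <-; rewrite -(inj_eq i0) !c2; apply: (proj2 (fr _)); exists h.
  - by move=> x y; rewrite -fe0 !c2 fe.
  - by move=> i; rewrite flb wlab_l c1.
  - by move=> i; rewrite flb wlab_r c1.
exists id; split => //.
- by exists id.
- move=> i; apply: fi; rewrite fli li /=.
  by rewrite /wlab; case: split => j; rewrite flb ?wlab_l ?wlab_r.
- move=> i; apply: fi; rewrite flo lo /=.
  by rewrite /wlab; case: split => j; rewrite flb ?wlab_l ?wlab_r.
Qed.

Lemma perm_contr F s X Y : bperm F s X -> edge_contraction X Y ->
  exists F', edge_contraction F F' /\ bperm F' s Y.
Proof.
case=> f0 [fb0 fe0 li lo] [a [b [eab [g [gs gab gk gE [gli glo]]]]]].
case: (fb0) => g0 c1 c2; have i0 : injective f0 := can_inj c1.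
exists (relab (fun i => g (f0 (bin F i))) (fun i => g (f0 (bout F i)))); split.
  exists (g0 a), (g0 b); split; first by rewrite -fe0 !c2.
  exists (fun x => g (f0 x)); split => //.
  - by move=> p; case: (gs p) => x <-; exists (g0 x); rewrite c2.
  - by rewrite !c2.
  - move=> x y /gk [/i0 -> |[h1 h2]]; first by left.
    by right; split; [case: h1 => <-; rewrite c1; tauto | case: h2 => <-; rewrite c1; tauto].
  - move=> p q; rewrite [edge (relab _ _) _ _]/edge /= -/(edge Y _ _) gE; split.
      case=> nq [A [B [gA gB eAB]]]; split => //; exists (g0 A), (g0 B); by rewrite -fe0 !c2.
    by case=> nq [x [y [gx gy exy]]]; split => //; exists (f0 x), (f0 y); rewrite fe0.
exists id; split => //.
- by exists id.
- by move=> i; rewrite gli li /wlab; case: split.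
- by move=> i; rewrite glo lo /wlab; case: split.
Qed.

Lemma PermL F s G : Good F -> bperm F s G -> in_cyclic k s -> Good G.
Proof.
move=> gF pG cs.
apply: (@Good_of_inv k (fun X => exists F', Good F' /\ bperm F' s X)).
- by move=> X [F' [g p]]; exact: Pk_perm (Good_Pk g) cs p.
- by move=> X Y [F' [g p]] e; exists F'; split => //; exact: perm_iso p e.
- move=> X Y [F' [g p]] e; case: (perm_edel p e) => F'' [e2 p2]; exists F''; split => //.
  exact: Good_minor g (bminor_edel _ _ _ (bminor_refl _) e2).
- move=> X Y [F' [g p]] e; case: (perm_vdel p e) => F'' [e2 p2]; exists F''; split => //.
  exact: Good_minor g (bminor_vdel _ _ _ (bminor_refl _) e2).
- move=> X Y [F' [g p]] e; case: (perm_contr p e) => F'' [e2 p2]; exists F''; split => //.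
  exact: Good_minor g (bminor_contr _ _ _ (bminor_refl _) e2).
- by exists F.
Qed.

End P5.

Section P6.
Variable k : nat.
Implicit Types F G H X Y : bgraph k.

Lemma ser_iso F Q X Y : bseries F Q X -> bg_iso X Y -> bseries F Q Y.
Proof.
case=> phi [gl li lo] [f [fb fe fi fo]]; exists (fun s => f (phi s)); split.
- exact: G_iso gl fb fe.
- by move=> i; rewrite -fi li.
- by move=> i; rewrite -fo lo.
Qed.

Lemma ser_edel F Q X Y : bseries F Q X -> edge_deletion X Y ->
  exists F' Q', [/\ bminor F F', bminor Q Q' & bseries F' Q' Y].
Proof.
case=> phi [gl li lo] [a [b [eab [f [fb fe fi fo]]]]].
exists (restrict F (fun x y => ~~ pr a b (phi (inl x)) (phi (inl y)))),
       (restrict Q (fun x y => ~~ pr a b (phi (inr x)) (phi (inr y)))).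
split; try exact: restrict_minor.
exists (fun s => f (phi s)); split.
- exact: G_edel gl fb fe.
- by move=> i; rewrite -fi li.
- by move=> i; rewrite -fo lo.
Qed.

Lemma ser_contr F Q X Y : bseries F Q X -> edge_contraction X Y ->
  exists F' Q', [/\ bminor F F', bminor Q Q' & bseries F' Q' Y].
Proof.
case=> phi [gl li lo] [a [b [eab [g [gs gab gk gE [gli glo]]]]]].
have [Hs Hk He] := gl.
case/He: eab => nab [[x [y [ex ey exy]]]|[x [y [ex ey exy]]]].
- have hxy := edge_neq exy. subst a b.
  have hom : forall s t, series_rel F Q s t -> series_rel (contract hxy) Q (mL hxy s) (mL hxy t).
    move=> s t h; exact: (LRel_hom (cmap hxy) id h).
  have back : forall s' t', series_rel (contract hxy) Q s' t' ->
      exists s t, [/\ mL hxy s = s', mL hxy t = t' & series_rel F Q s t].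
    move=> s' t' h.
    have [s [t [e1 e2 r]]] := LRel_back (l1 := bout F) (l2 := bin Q) (f1 := cmap hxy) (f2 := id) h.
    by exists s, t; split; [exact: e1|exact: e2|exact: r].
  have gl2 := G_contrL gl exy gs gab gk gE hom back.
  exists (contract hxy), Q; split.
  + exact: bminor_contr _ _ _ (bminor_refl _) (contract_ec hxy exy).
  + exact: bminor_refl.
  exists (fun s => g (phi (embL s))); split => //.
  + move=> i; rewrite gli li; symmetry; exact: (cmap_hval hxy (h := fun v => g (phi (inl v))) _ gab).
  + by move=> i; rewrite glo lo.
- have hxy := edge_neq exy. subst a b.
  have hom : forall s t, series_rel F Q s t ->
      series_rel F (contract hxy) (smap id (cmap hxy) s) (smap id (cmap hxy) t).
    move=> s t h; exact: (LRel_hom id (cmap hxy) h).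
  have back : forall s' t', series_rel F (contract hxy) s' t' ->
      exists s t, [/\ smap id (cmap hxy) s = s', smap id (cmap hxy) t = t' & series_rel F Q s t].
    move=> s' t' h.
    have [s [t [e1 e2 r]]] := LRel_back (l1 := bout F) (l2 := bin Q) (f1 := id) (f2 := cmap hxy) h.
    by exists s, t; split; [exact: e1|exact: e2|exact: r].
  have gl2 := G_contrR gl exy gs gab gk gE hom back.
  exists F, (contract hxy); split.
  + exact: bminor_refl.
  + exact: bminor_contr _ _ _ (bminor_refl _) (contract_ec hxy exy).
  exists (fun s => g (phi (smap id val s))); split => //.
  + by move=> i; rewrite gli li.
  + move=> i; rewrite glo lo; symmetry; exact: (cmap_hval hxy (h := fun v => g (phi (inr v))) _ gab).
Qed.

Lemma ser_vdelL F Q X Y phi w (f : bvert Y -> bvert X) (z : bvert F) :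
  glued F Q X (series_rel F Q) phi ->
  (forall i, bin X i = phi (inl (bin F i))) -> (forall i, bout X i = phi (inr (bout Q i))) ->
  (forall i, bin X i != w) -> injective f -> (forall y, y != w <-> exists u, f u = y) ->
  (forall u v, edge X (f u) (f v) = edge Y u v) ->
  (forall i, f (bin Y i) = bin X i) -> (forall i, f (bout Y i) = bout X i) ->
  phi (inl z) = w -> (forall i, bout F i != z) ->
  exists F', bminor F F' /\ bseries F' Q Y.
Proof.
move=> gl li lo hwi fi fr fe fli flo hz ho.
have hi : forall i, bin F i != z.
  by move=> i; apply/eqP => e; have := hwi i; rewrite li e hz eqxx.
have R1 : forall t, ~~ series_rel F Q (inl z) t by move=> t; case: (LRel_freeL (bin Q) t ho).
have R2 : forall t, ~~ series_rel F Q t (inl z) by move=> t; case: (LRel_freeL (bin Q) t ho).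
have Hr : forall y, y != phi (inl z) <-> exists u, f u = y by rewrite hz.
have [psi [gl2 fpsi]] := G_vdelL hi ho gl R1 R2 fi Hr fe.
exists (delv hi ho); split; first exact: bminor_vdel _ _ _ (bminor_refl _) (delv_vd hi ho).
exists psi; split.
- apply: glued_eqR gl2 => s t; rewrite !series_LRel !embL_smap.
  by apply: LRel_pull; [exact: val_inj | by move=> ? ? -> | by [] | by []].
- by move=> i; apply: fi; rewrite fpsi fli li.
- by move=> i; apply: fi; rewrite fpsi flo lo.
Qed.

Lemma ser_vdelR F Q X Y phi w (f : bvert Y -> bvert X) (z : bvert Q) :
  glued F Q X (series_rel F Q) phi ->
  (forall i, bin X i = phi (inl (bin F i))) -> (forall i, bout X i = phi (inr (bout Q i))) ->
  (forall i, bout X i != w) -> injective f -> (forall y, y != w <-> exists u, f u = y) ->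
  (forall u v, edge X (f u) (f v) = edge Y u v) ->
  (forall i, f (bin Y i) = bin X i) -> (forall i, f (bout Y i) = bout X i) ->
  phi (inr z) = w -> (forall i, bin Q i != z) ->
  exists Q', bminor Q Q' /\ bseries F Q' Y.
Proof.
move=> gl li lo hwo fi fr fe fli flo hz hi.
have ho : forall i, bout Q i != z.
  by move=> i; apply/eqP => e; have := hwo i; rewrite lo e hz eqxx.
have R1 : forall t, ~~ series_rel F Q (inr z) t by move=> t; case: (LRel_freeR (bout F) t hi).
have R2 : forall t, ~~ series_rel F Q t (inr z) by move=> t; case: (LRel_freeR (bout F) t hi).
have Hr : forall y, y != phi (inr z) <-> exists u, f u = y by rewrite hz.
have [psi [gl2 fpsi]] := G_vdelR hi ho gl R1 R2 fi Hr fe.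
exists (delv hi ho); split; first exact: bminor_vdel _ _ _ (bminor_refl _) (delv_vd hi ho).
exists psi; split.
- apply: glued_eqR gl2 => s t; rewrite !series_LRel.
  by apply: LRel_pull; [by move=> ? ? -> | exact: val_inj | by [] | by []].
- by move=> i; apply: fi; rewrite fpsi fli li.
- by move=> i; apply: fi; rewrite fpsi flo lo.
Qed.

End P6.

Section P7.
Variable k : nat.
Implicit Types F G H X Y : bgraph k.

Lemma Ck_edge_out n (h1 : n < k) (h2 : n.+1 < k) :
  edge (Ck k) (rshift k (Ordinal h1)) (rshift k (Ordinal h2)).
Proof.
rewrite /edge /=; apply/andP; split.
  by apply/eqP => /(congr1 val) /=; lia.
apply/orP; left; rewrite /Cadj /=; apply/orP; right; apply/orP; left.
apply/andP; split; [lia | apply/eqP; lia].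
Qed.

Lemma Ck_edge_0 (h : 0 < k) :
  edge (Ck k) (rshift k (Ordinal h)) (lshift k (Ordinal h)).
Proof.
rewrite /edge /=; apply/andP; split.
  by apply/eqP => /(congr1 val) /=; lia.
apply/orP; right; rewrite /Cadj /=; apply/orP; right; apply/orP; right; apply/orP; left.
apply/eqP; lia.
Qed.

Lemma disc (P : nat -> bool) a b : a <= b -> P a != P b -> exists n, a <= n < b /\ P n != P n.+1.
Proof.
elim: b => [|b IH] hab.
  by move: hab; rewrite leqn0 => /eqP ->; rewrite eqxx.
move: hab; rewrite leq_eqVlt => /orP [/eqP ->|hab]; first by rewrite eqxx.
case: (boolP (P a == P b)) => [/eqP e|ne] hn.
  by exists b; split; [apply/andP; split | rewrite -e].
have [n [hn1 hn2]] := IH hab ne; exists n; split => //.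
by case/andP: hn1 => -> /ltnW.
Qed.

Lemma sval_cmap F (x y : bvert F) (hxy : x != y) v :
  sval (cmap hxy v) = if v != y then v else x.
Proof. exact: val_cmap. Qed.

Lemma ser_glue F1 F2 X Y phi w (f : bvert Y -> bvert X) i0 :
  Good F1 -> Good F2 ->
  glued F1 F2 X (series_rel F1 F2) phi ->
  (forall i, bin X i = phi (inl (bin F1 i))) -> (forall i, bout X i = phi (inr (bout F2 i))) ->
  (forall i, bin X i != w) -> (forall i, bout X i != w) ->
  injective f -> (forall y, y != w <-> exists u, f u = y) ->
  (forall u v, edge X (f u) (f v) = edge Y u v) ->
  (forall i, f (bin Y i) = bin X i) -> (forall i, f (bout Y i) = bout X i) ->
  phi (inl (bout F1 i0)) = w ->
  exists F1' F2', [/\ Good F1', Good F2' & bseries F1' F2' Y].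
Proof.
move=> g1 g2 gl li lo hwi hwo fi fr fe fli flo h0.
have [Hs Hk He] := gl.
have [u [v [huv hu hv]]] : exists u v,
    [/\ edge (Ck k) u v, phi (inl (wlab F1 u)) = w & phi (inl (wlab F1 v)) != w].
  case: (pickP (fun j : 'I_k => phi (inl (bout F1 j)) != w)) => [j hj | all].
    pose P n := [exists j' : 'I_k, (j' == n :> nat) && (phi (inl (bout F1 j')) == w)].
    have Pj : forall j' : 'I_k, P j' = (phi (inl (bout F1 j')) == w).
      move=> j'; apply/existsP/idP => [[j'' /andP [/eqP e h]]|h]; last by exists j'; rewrite eqxx.
      by have -> : j' = j'' by apply: val_inj.
    have [n [hn pn]] : exists n, n.+1 < k /\ P n != P n.+1.
      have pd : P i0 != P j by rewrite !Pj h0 eqxx (negbTE hj).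
      case: (leqP i0 j) => hij.
        have [n [/andP [_ hn] pn]] := @disc P _ _ hij pd.
        by exists n; split => //; apply: leq_ltn_trans hn (ltn_ord j).
      have pd' : P j != P i0 by rewrite eq_sym.
      have [n [/andP [_ hn] pn]] := @disc P _ _ (ltnW hij) pd'.
      by exists n; split => //; apply: leq_ltn_trans hn (ltn_ord i0).
    have h1 : n < k by apply: ltnW.
    have e1 := Pj (Ordinal h1); have e2 := Pj (Ordinal hn); rewrite /= in e1 e2.
    move: pn; rewrite e1 e2.
    case: (boolP (phi (inl (bout F1 (Ordinal h1))) == w)) => /= E1 E2.
      exists (rshift k (Ordinal h1)), (rshift k (Ordinal hn)); rewrite !wlab_r; split.
      - exact: Ck_edge_out.
      - exact/eqP.
      - by apply/negP => /eqP e; move: E2; rewrite e eqxx.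
    exists (rshift k (Ordinal hn)), (rshift k (Ordinal h1)); rewrite !wlab_r; split => //.
    - by rewrite edge_sym; exact: Ck_edge_out.
    - by apply/eqP; move: E2; case: (_ == w).
  have k0 : 0 < k := leq_ltn_trans (leq0n i0) (ltn_ord i0).
  exists (rshift k (Ordinal k0)), (lshift k (Ordinal k0)); rewrite wlab_r wlab_l; split.
  - exact: Ck_edge_0.
  - by apply/eqP; move: (all (Ordinal k0)) => /= /negbFE.
  - by rewrite -li.
pose keep1 := fun x y : bvert F1 => (phi (inl x) != w) && (phi (inl y) != w).
pose keep2 := fun x y : bvert F2 => (phi (inr x) != w) && (phi (inr y) != w).
pose F1' := restrict F1 keep1; pose F2' := restrict F2 keep2.
have hab : wlab F1' v != wlab F1' u.
  rewrite !wlab_restrict; apply: contraNneq hv => ->; by rewrite hu.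
have [Q [qQ pQ]] := merge_par huv hab.
pose F1'' := contract hab.
have gF1'' : Good F1'' := Par (Good_minor g1 (restrict_minor keep1)) qQ pQ.
have gF2' : Good F2' := Good_minor g2 (restrict_minor keep2).
exists F1'', F2'; split => //.
pose a := wlab F1 u; pose b := wlab F1 v.
pose c := cmap hab.
pose red (t : bvert F1 + bvert F2) := if phi t == w then phi (inl b) else phi t.
have redw : forall t, red t != w by move=> t; rewrite /red; case: ifP => // /negbT.
pose rho (s : bvert F1'' + bvert F2') : bvert F1 + bvert F2 := smap val id s.
pose gg (t : bvert F1 + bvert F2) : bvert F1'' + bvert F2' := smap c id t.
have ggK : forall s, gg (rho s) = s by case=> x //; rewrite /gg /rho /=; congr inl; exact: cmap_val.
have redg : forall t, red (rho (gg t)) = red t.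
  case=> x; rewrite /rho /gg //= sval_cmap; case: ifP => [//|/negbFE /eqP ex].
  by rewrite /red ex -/a hu eqxx (negbTE hv).
have exh : forall s, exists h, f h == red (rho s).
  by move=> s; case: (proj1 (fr _) (redw (rho s))) => h hh; exists h; rewrite hh.
pose psi s := xchoose (exh s).
have fpsi : forall s, f (psi s) = red (rho s) by move=> s; exact/eqP/(xchooseP (exh s)).
have fg : forall t, f (psi (gg t)) = red t by move=> t; rewrite fpsi redg.
have fgl : forall x, f (psi (inl (c x))) = red (inl x) := fun x => fg (inl x).
have fgr : forall x, f (psi (inr x)) = red (inr x) := fun x => fg (inr x).
have redE : forall t, phi t != w -> red t = phi t by rewrite /red => t /negbTE ->.
pose R := series_rel F1 F2; pose R' := series_rel F1'' F2'.
have hom : forall t t', R t t' -> R' (gg t) (gg t') := fun t t' h => LRel_hom c id h.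
have back : forall s s', R' s s' -> exists t t', [/\ gg t = s, gg t' = s' & R t t'] :=
  fun s s' h => LRel_back (l1 := bout F1) (l2 := bin F2) (f1 := c) (f2 := id) h.
have symR' : connect_sym R' by apply: sym_connect_sym => x y; exact: LRel_sym.
have gab : gg (inl a) = gg (inl b) by rewrite /gg /=; congr inl; symmetry; exact: cmap_xy.
have toA : forall t, phi t = w -> connect R' (gg t) (gg (inl a)).
  by move=> t0 e; apply: (connect_hom hom); apply/Hk; rewrite e hu.
have key : forall t t', red t = red t' -> connect R' (gg t) (gg t').
  move=> t t'; rewrite /red; case: ifP => E1; case: ifP => E2 e.
  - by apply: (connect_hom hom); apply/Hk; rewrite (eqP E1) (eqP E2).
  - apply: connect_trans (toA t (eqP E1)) _; rewrite gab; apply: (connect_hom hom); exact/Hk.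
  - rewrite symR'; apply: connect_trans (toA t' (eqP E2)) _; rewrite gab; apply: (connect_hom hom).
    by apply/Hk.
  - by apply: (connect_hom hom); apply/Hk.
have inR : forall P, f P != w by move=> P; apply: (proj2 (fr _)); exists P.
exists psi; split; last first.
- by move=> i; apply: fi; rewrite flo lo fgr redE // -lo.
- by move=> i; apply: fi; rewrite fli li fgl redE // -li.
split.
- move=> P; case: (Hs (f P)) => t ht; exists (gg t); apply: fi.
  by rewrite fg redE // ht.
- move=> s s'; split.
  + move=> e; have : red (rho s) = red (rho s') by rewrite -!fpsi e.
    by move/key; rewrite !ggK.
  + move=> c0; apply: fi; rewrite !fpsi; move: c0.
    apply: (@connect_ind _ R' (fun s s' => red (rho s) = red (rho s'))) => //.
      by move=> ? ? ? -> ->.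
    move=> x y /back [t [t' [<- <- r]]]; rewrite !redg.
    have e : phi t = phi t' by apply/Hk; exact: connect1 r.
    by rewrite /red e.
- move=> P P'; rewrite -fe He (inj_eq fi); split.
  + case=> nq [[x [y [ex ey exy]]]|[x [y [ex ey exy]]]]; split => //.
      have nx : phi (inl x) != w by rewrite ex.
      have ny : phi (inl y) != w by rewrite ey.
      left; exists (c x), (c y); split.
      * by apply: fi; rewrite fgl redE.
      * by apply: fi; rewrite fgl redE.
      * apply/edge_contract; split.
          apply/negP => /eqP e; move: nq.
          have : f (psi (inl (c x))) = f (psi (inl (c y))) by rewrite e.
          rewrite !fgl !redE // ex ey => /fi ->; by rewrite eqxx.
        by exists x, y; split => //; rewrite edge_restrict exy /keep1 nx ny.
    have nx : phi (inr x) != w by rewrite ex.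
    have ny : phi (inr y) != w by rewrite ey.
    right; exists x, y; split.
    * by apply: fi; rewrite fgr redE.
    * by apply: fi; rewrite fgr redE.
    * by rewrite edge_restrict exy /keep2 nx ny.
  + case=> nq [[u1 [v1 [eu ev /edge_contract [nuv [a1 [b1 [ea eb eab]]]]]]]|[x [y [ex ey exy]]]];
      split => //.
      move: eab; rewrite edge_restrict /keep1 => /andP [/andP [eab /andP [na nb]] _].
      left; exists a1, b1; split => //.
      * by rewrite -eu -ea fgl redE.
      * by rewrite -ev -eb fgl redE.
    move: exy; rewrite edge_restrict /keep2 => /andP [/andP [exy /andP [na nb]] _].
    right; exists x, y; split => //.
    * by rewrite -ex fgr redE.
    * by rewrite -ey fgr redE.
Qed.

End P7.

Lemma Ser k (F1 F2 G : bgraph k) : Good F1 -> Good F2 -> bseries F1 F2 G -> Good G.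
Proof.
move=> gF1 gF2 sG.
apply: (@Good_of_inv k (fun X => exists F1 F2, [/\ Good F1, Good F2 & bseries F1 F2 X])).
- by move=> X [A [B [ga gb p]]]; exact: Pk_series (Good_Pk ga) (Good_Pk gb) p.
- move=> X Y [A [B [ga gb p]]] e; exists A, B; split => //; exact: ser_iso p e.
- move=> X Y [A [B [ga gb p]]] e; case: (ser_edel p e) => A' [B' [m1 m2 p2]].
  exists A', B'; split => //; [exact: Good_minor ga m1 | exact: Good_minor gb m2].
- move=> X Y [A [B [ga gb p]]] e.
  case: p => phi [gl li lo]; case: e => w [hwi [hwo [f [fi fr fe fli flo]]]].
  case: (pickP (fun i => phi (inl (bout A i)) == w)) => [i0 /eqP h0 | none].
    exact: ser_glue ga gb gl li lo hwi hwo fi fr fe fli flo h0.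
  have [Hs Hk He] := gl; case: (Hs w) => -[z|z] hz.
    have ho : forall i, bout A i != z.
      by move=> i; apply/eqP => e; have := none i; rewrite e hz eqxx.
    have [A' [m p2]] := ser_vdelL gl li lo hwi fi fr fe fli flo hz ho.
    by exists A', B; split => //; exact: Good_minor ga m.
  have hi : forall i, bin B i != z.
    move=> i; apply/eqP => e.
    have : phi (inl (bout A i)) = phi (inr (bin B i)).
      by apply/Hk; apply: connect1; apply/existsP; exists i; rewrite !eqxx.
    by rewrite e hz => /eqP; rewrite none.
  have [B' [m p2]] := ser_vdelR gl li lo hwo fi fr fe fli flo hz hi.
  by exists A, B'; split => //; exact: Good_minor gb m.
- move=> X Y [A [B [ga gb p]]] e; case: (ser_contr p e) => A' [B' [m1 m2 p2]].
  exists A', B'; split => //; [exact: Good_minor ga m1 | exact: Good_minor gb m2].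
- by exists F1, F2.
Qed.

Unset Implicit Arguments.

Theorem lemma4p8 (k : nat) (F G : bgraph k) :
  Pk F -> bminor F G -> Pk G.
Proof.
move=> pF; suff: Good F by apply.
elim: pF => {F G}.
- by move=> F h; exact: Good_Q.
- by move=> F F' G _ g1 _ g2 s; exact: Ser g1 g2 s.
- by move=> F Q G _ g q p; exact: Par g q p.
- by move=> F s G _ g c p; exact: PermL g p c.
Qed.
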